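(* Let $X \subseteq \mathbb{Z}^{\omega}$ be closed under tail-equivalence. Then $X$ is homogeneous in $\mathbb{Z}^{\omega}$: for every open interval $I$ of $\mathbb{Z}^{\omega}$ we have $X \cong X\cap I$ (order-isomorphism). In particular, $X \cong X \cap I_r$ for every nonempty finite integer sequence $r$, where $I_r$ is the set of elements of $\mathbb{Z}^{\omega}$ beginning with $r$.
   Context: $\mathbb{Z}^{\omega}$ is the set of integer sequences with the lexicographic order ($u<v$ iff $u_n<v_n$ at the least $n$ with $u_n\ne v_n$). For a finite nonempty integer sequence $r$ and a sequence $u$, $ru$ is concatenation. $u,v\in\mathbb{Z}^{\omega}$ are tail-equivalent if $u=ru'$ and $v=su'$ for some finite sequences $r,s$ (possibly of different lengths) and some $u'\in\mathbb{Z}^{\omega}$; $X$ is closed under tail-equivalence if it is a union of tail-equivalence classes. An open interval of a linear order is a nonempty convex subset with neither a greatest nor a least element (its endpoints, if any, may be gaps of $\mathbb{Z}^{\omega}$). *)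

(* Defs.v *)
From Stdlib Require Import ZArith List Arith.
Import ListNotations.
Open Scope Z_scope.

Definition Zomega := nat -> Z.

Definition lex_lt (u v : Zomega) : Prop :=
  exists n : nat, (forall m : nat, (m < n)%nat -> u m = v m) /\ u n < v n.

Definition prepend (r : list Z) (u : Zomega) : Zomega :=
  fun n => if Nat.ltb n (length r) then nth n r 0 else u (n - length r)%nat.

Definition tail_equiv (u v : Zomega) : Prop :=
  exists (r s : list Z) (u' : Zomega), u = prepend r u' /\ v = prepend s u'.

Definition tail_closed (X : Zomega -> Prop) : Prop :=
  forall u v, tail_equiv u v -> X u -> X v.

Definition open_interval (I : Zomega -> Prop) : Prop :=
  (exists u, I u) /\
  (forall a b c, I a -> I c -> lex_lt a b -> lex_lt b c -> I b) /\
  (forall a, I a -> exists b, I b /\ lex_lt a b) /\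
  (forall a, I a -> exists b, I b /\ lex_lt b a).

(** A and B (subsets of Z^omega with the lexicographic order) are
    order-isomorphic: some map sends A onto B and preserves and reflects the
    order (hence is injective on A, since lex_lt is a strict total order). *)
Definition order_iso (A B : Zomega -> Prop) : Prop :=
  exists f : Zomega -> Zomega,
    (forall x, A x -> B (f x)) /\
    (forall y, B y -> exists x, A x /\ f x = y) /\
    (forall x y, A x -> A y -> (lex_lt x y <-> lex_lt (f x) (f y))).

Definition cone (r : list Z) : Zomega -> Prop :=
  fun u => exists u', u = prepend r u'.

(* Main.v *)
Require Import Defs.
From Stdlib Require Import ZArith List Lia Classical ClassicalEpsilon FunctionalExtensionality.
Import ListNotations.
Open Scope Z_scope.

Lemma ex_least (P : nat -> Prop) : (exists n, P n) -> exists n, P n /\ forall m, (m < n)%nat -> ~ P m.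
Proof.
  intros [n Hn].
  induction n as [n IH] using (well_founded_induction lt_wf).
  destruct (classic (exists m, (m < n)%nat /\ P m)) as [[m [Hm1 Hm2]]|Hno].
  - exact (IH m Hm1 Hm2).
  - exists n; split; auto. intros m Hm Pm; apply Hno; eauto.
Qed.

Lemma lt_irrefl x : ~ lex_lt x x.
Proof. intros [n [_ H]]; lia. Qed.

Lemma lt_trans x y z : lex_lt x y -> lex_lt y z -> lex_lt x z.
Proof.
  intros [n [Hn1 Hn2]] [m [Hm1 Hm2]].
  destruct (Nat.lt_total n m) as [H|[H|H]].
  - exists n; split.
    + intros i Hi; rewrite Hn1 by lia; apply Hm1; lia.
    + rewrite <- (Hm1 n H); exact Hn2.
  - subst m; exists n; split.
    + intros i Hi; rewrite Hn1 by lia; apply Hm1; lia.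
    + lia.
  - exists m; split.
    + intros i Hi; rewrite Hn1 by lia; apply Hm1; lia.
    + rewrite (Hn1 m H); exact Hm2.
Qed.

Lemma lt_asym x y : lex_lt x y -> ~ lex_lt y x.
Proof. intros H1 H2; exact (lt_irrefl _ (lt_trans _ _ _ H1 H2)). Qed.

Lemma lt_total x y : x = y \/ lex_lt x y \/ lex_lt y x.
Proof.
  destruct (classic (forall n, x n = y n)) as [H|H].
  - left; apply functional_extensionality; exact H.
  - apply not_all_ex_not in H.
    destruct (ex_least _ H) as [n [Hn Hmin]].
    assert (Hag : forall m, (m < n)%nat -> x m = y m).
    { intros m Hm; specialize (Hmin m Hm); apply NNPP; exact Hmin. }
    right; destruct (Z.lt_total (x n) (y n)) as [h|[h|h]].
    + left; exists n; split; auto.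
    + contradiction.
    + right; exists n; split; auto. intros m Hm; symmetry; auto.
Qed.

Lemma le_lt_trans x y z : lex_lt x z -> ~ lex_lt y z -> lex_lt x y.
Proof.
  intros H1 H2. destruct (lt_total y z) as [e|[h|h]].
  - subst; auto.
  - contradiction.
  - eapply lt_trans; eauto.
Qed.

Lemma lt_le_trans x y z : ~ lex_lt z x -> lex_lt z y -> lex_lt x y.
Proof.
  intros H1 H2. destruct (lt_total x z) as [e|[h|h]].
  - subst; auto.
  - eapply lt_trans; eauto.
  - contradiction.
Qed.

Definition te (u v : Zomega) := exists m n, forall k, u (m+k)%nat = v (n+k)%nat.

Lemma te_refl u : te u u.
Proof. exists 0%nat, 0%nat; auto. Qed.
Lemma te_sym u v : te u v -> te v u.
Proof. intros [m [n H]]; exists n, m; intros; symmetry; auto. Qed.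
Lemma te_trans u v w : te u v -> te v w -> te u w.
Proof.
  intros [m [n H]] [m' [n' H']]. exists (m + m')%nat, (n' + n)%nat. intros k.
  replace (m + m' + k)%nat with (m + (m' + k))%nat by lia. rewrite H.
  replace (n + (m' + k))%nat with (m' + (n + k))%nat by lia. rewrite H'.
  f_equal; lia.
Qed.

Lemma te_tail u v : te u v -> tail_equiv u v.
Proof.
  intros [m [n H]].
  exists (map u (seq 0 m)), (map v (seq 0 n)), (fun k => u (m + k)%nat).
  split; apply functional_extensionality; intros i; unfold prepend;
    rewrite length_map, length_seq.
  - destruct (Nat.ltb_spec i m).
    + rewrite (nth_indep _ 0 (u 0%nat)) by (rewrite length_map, length_seq; lia).
      rewrite map_nth, seq_nth by lia. reflexivity.
    + f_equal; lia.
  - destruct (Nat.ltb_spec i n).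
    + rewrite (nth_indep _ 0 (v 0%nat)) by (rewrite length_map, length_seq; lia).
      rewrite map_nth, seq_nth by lia. reflexivity.
    + rewrite H. f_equal; lia.
Qed.

Definition agree (x : Zomega) (d : nat) (u : Zomega) := forall i, (i < d)%nat -> u i = x i.
Definition shift (d : nat) (u : Zomega) : Zomega := fun k => u (d + k)%nat.
Definition graft (x : Zomega) (d : nat) (v : Zomega) : Zomega :=
  fun n => if Nat.ltb n d then x n else v (n - d)%nat.

Lemma graft_lt x d v v' : lex_lt (graft x d v) (graft x d v') <-> lex_lt v v'.
Proof.
  unfold graft; split.
  - intros [n [H1 H2]].
    destruct (Nat.ltb_spec n d). { lia. }
    exists (n - d)%nat; split.
    + intros m Hm. specialize (H1 (d + m)%nat ltac:(lia)).
      destruct (Nat.ltb_spec (d+m) d); [lia|].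
      replace (d + m - d)%nat with m in H1 by lia. exact H1.
    + exact H2.
  - intros [n [H1 H2]]. exists (d + n)%nat; split.
    + intros m Hm. destruct (Nat.ltb_spec m d); auto. apply H1; lia.
    + destruct (Nat.ltb_spec (d+n) d); [lia|].
      replace (d + n - d)%nat with n by lia. exact H2.
Qed.

Lemma graft_agree x d v : agree x d (graft x d v).
Proof. intros i Hi; unfold graft; destruct (Nat.ltb_spec i d); [auto|lia]. Qed.

Lemma shift_graft x d v : shift d (graft x d v) = v.
Proof.
  apply functional_extensionality; intros k; unfold shift, graft.
  destruct (Nat.ltb_spec (d+k) d); [lia|]. f_equal; lia.
Qed.

Lemma graft_shift x d u : agree x d u -> graft x d (shift d u) = u.
Proof.
  intros H; apply functional_extensionality; intros k; unfold shift, graft.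
  destruct (Nat.ltb_spec k d). { symmetry; auto. } f_equal; lia.
Qed.

Lemma te_graft x d v : te v (graft x d v).
Proof.
  exists 0%nat, d; intros k; unfold graft.
  destruct (Nat.ltb_spec (d+k) d); [lia|]. f_equal; lia.
Qed.
Definition Tw (f : Zomega -> Zomega) (A B : Zomega -> Prop) :=
  (forall x, A x -> B (f x)) /\
  (forall y, B y -> exists x, A x /\ f x = y) /\
  (forall x y, A x -> A y -> (lex_lt x y <-> lex_lt (f x) (f y))) /\
  (forall x, A x -> te x (f x)).
Definition Tiso A B := exists f, Tw f A B.

Lemma Tiso_id A : Tiso A A.
Proof.
  exists (fun u => u); repeat split; eauto using te_refl; tauto.
Qed.

Lemma Tiso_ext A A' B B' : (forall u, A u <-> A' u) -> (forall u, B u <-> B' u) ->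
  Tiso A B -> Tiso A' B'.
Proof.
  intros HA HB [f [H1 [H2 [H3 H4]]]]; exists f; repeat split.
  - intros x Hx; apply (proj1 (HB _)), H1, (proj2 (HA _)), Hx.
  - intros y Hy; destruct (H2 y (proj2 (HB y) Hy)) as [x [Hx e]]; exists x; split; auto; apply (proj1 (HA _)); auto.
  - intros Hl; apply (proj1 (H3 x y (proj2 (HA _) H) (proj2 (HA _) H0))); auto.
  - intros Hl; apply (proj2 (H3 x y (proj2 (HA _) H) (proj2 (HA _) H0))); auto.
  - intros x Hx; apply H4, (proj2 (HA _)), Hx.
Qed.

Lemma Tw_inj f A B x y : Tw f A B -> A x -> A y -> f x = f y -> x = y.
Proof.
  intros [_ [_ [H3 _]]] Hx Hy e.
  destruct (lt_total x y) as [h|[h|h]]; auto.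
  - apply (H3 x y Hx Hy) in h; rewrite e in h; destruct (lt_irrefl _ h).
  - apply (H3 y x Hy Hx) in h; rewrite e in h; destruct (lt_irrefl _ h).
Qed.

Lemma Tiso_trans A B C : Tiso A B -> Tiso B C -> Tiso A C.
Proof.
  intros [f [F1 [F2 [F3 F4]]]] [g [G1 [G2 [G3 G4]]]].
  exists (fun u => g (f u)); repeat split.
  - auto.
  - intros z Hz; destruct (G2 z Hz) as [y [Hy e]]; destruct (F2 y Hy) as [x [Hx e']];
      exists x; split; auto; subst; auto.
  - intros Hl; apply (proj1 (G3 _ _ (F1 _ H) (F1 _ H0))), (proj1 (F3 _ _ H H0)); auto.
  - intros Hl; apply (proj2 (F3 _ _ H H0)), (proj2 (G3 _ _ (F1 _ H) (F1 _ H0))); auto.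
  - intros x Hx; eapply te_trans; eauto.
Qed.

Lemma Tiso_sym A B : Tiso A B -> Tiso B A.
Proof.
  intros [f Hf].
  set (g := fun y => match excluded_middle_informative (exists x, A x /\ f x = y) with
                     | left h => proj1_sig (constructive_indefinite_description _ h)
                     | right _ => y end).
  assert (Hg : forall y, B y -> A (g y) /\ f (g y) = y).
  { intros y Hy. unfold g. destruct (excluded_middle_informative _) as [h|h].
    - destruct (constructive_indefinite_description _ h) as [x Hx]; simpl; auto.
    - exfalso; apply h; apply (proj1 (proj2 Hf)); auto. }
  destruct Hf as [F1 [F2 [F3 F4]]] eqn:EHf.
  exists g; repeat split.
  - intros y Hy; apply Hg; auto.
  - intros x Hx. exists (f x); split; auto.
    destruct (Hg (f x) (F1 x Hx)) as [h1 h2]. eapply Tw_inj; eauto.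
  - intros Hl. destruct (Hg x H) as [a1 a2]; destruct (Hg y H0) as [b1 b2].
    apply (proj2 (F3 _ _ a1 b1)). rewrite a2, b2; auto.
  - intros Hl. destruct (Hg x H) as [a1 a2]; destruct (Hg y H0) as [b1 b2].
    rewrite <- a2, <- b2. apply (proj1 (F3 _ _ a1 b1)); auto.
  - intros y Hy. destruct (Hg y Hy) as [a1 a2]. apply te_sym.
    rewrite <- a2 at 2. apply F4; auto.
Qed.

Lemma glue (A B : nat -> Zomega -> Prop) :
  (forall d e x y, (d < e)%nat -> A d x -> A e y -> lex_lt y x) ->
  (forall d e x y, (d < e)%nat -> B d x -> B e y -> lex_lt y x) ->
  (forall d, Tiso (A d) (B d)) ->
  Tiso (fun u => exists d, A d u) (fun u => exists d, B d u).
Proof.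
  intros HA HB HT.
  set (F := fun d => proj1_sig (constructive_indefinite_description _ (HT d))).
  assert (HF : forall d, Tw (F d) (A d) (B d)).
  { intros d; unfold F; destruct (constructive_indefinite_description _ (HT d)); auto. }
  assert (Huniq : forall d e u, A d u -> A e u -> d = e).
  { intros d e u H1 H2. destruct (Nat.lt_total d e) as [h|[h|h]]; auto.
    - destruct (lt_irrefl _ (HA _ _ _ _ h H1 H2)).
    - destruct (lt_irrefl _ (HA _ _ _ _ h H2 H1)). }
  set (f := fun u => match excluded_middle_informative (exists d, A d u) with
                     | left h => F (proj1_sig (constructive_indefinite_description _ h)) u
                     | right _ => u end).
  assert (Hf : forall d u, A d u -> f u = F d u).
  { intros d u Hu. unfold f. destruct (excluded_middle_informative _) as [h|h].
    - destruct (constructive_indefinite_description _ h) as [d' Hd']; simpl.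
      rewrite (Huniq _ _ _ Hd' Hu); auto.
    - exfalso; eauto. }
  exists f; repeat split.
  - intros x [d Hd]; exists d; rewrite (Hf _ _ Hd); apply (HF d); auto.
  - intros y [d Hd]. destruct (proj1 (proj2 (HF d)) y Hd) as [x [Hx e]].
    exists x; split; eauto. rewrite (Hf _ _ Hx); auto.
  - intros Hl; destruct H as [d Hd]; destruct H0 as [e He]. rewrite (Hf _ _ Hd), (Hf _ _ He).
    destruct (Nat.lt_total d e) as [h|[h|h]].
    + destruct (lt_asym _ _ Hl (HA _ _ _ _ h Hd He)).
    + subst e. apply (proj1 (proj1 (proj2 (proj2 (HF d))) _ _ Hd He)); auto.
    + apply (HB _ _ _ _ h); apply (HF _); auto.
  - intros Hl; destruct H as [d Hd]; destruct H0 as [e He]. rewrite (Hf _ _ Hd), (Hf _ _ He) in Hl.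
    destruct (Nat.lt_total d e) as [h|[h|h]].
    + exfalso. eapply lt_asym; [exact Hl|]. apply (HB _ _ _ _ h); apply (HF _); auto.
    + subst e. apply (proj2 (proj1 (proj2 (proj2 (HF d))) _ _ Hd He)); auto.
    + apply (HA _ _ _ _ h); auto.
  - intros x [d Hd]. rewrite (Hf _ _ Hd). apply (HF d); auto.
Qed.

Lemma Tw_graft x d B : Tw (graft x d) B (fun u => agree x d u /\ B (shift d u)).
Proof.
  split; [|split; [|split]].
  - intros v Hv; split; [apply graft_agree|rewrite shift_graft; auto].
  - intros y [H1 H2]; exists (shift d y); split; auto; apply graft_shift; auto.
  - intros u v _ _; symmetry; apply graft_lt.
  - intros v _; apply te_graft.
Qed.

Lemma Tiso_graft x d B : Tiso B (fun u => agree x d u /\ B (shift d u)).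
Proof. exists (graft x d); apply Tw_graft. Qed.

Definition cst (a : Z) : Zomega := fun _ => a.

Lemma graft_cst a : graft (cst a) 1 (cst a) = cst a.
Proof. apply functional_extensionality; intros n; unfold graft, cst; destruct (Nat.ltb _ _); auto. Qed.

Lemma lt_head x y : x 0%nat < y 0%nat -> lex_lt x y.
Proof. intros H; exists 0%nat; split; auto; intros; lia. Qed.

Lemma gadget_up a : Tiso (fun _ => True) (fun u => a <= u 0%nat).
Proof.
  set (z := cst a).
  set (f := fun u => if excluded_middle_informative (lex_lt u z) then graft z 1 u else u).
  assert (Hz : forall u, lex_lt u z -> u 0%nat <= a).
  { intros u [n [H1 H2]]. destruct n. - unfold z, cst in H2; lia. - rewrite (H1 0%nat) by lia; unfold z, cst; lia. }
  assert (Hz' : forall u, ~ lex_lt u z -> a <= u 0%nat).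
  { intros u H. destruct (lt_total u z) as [e|[h|h]]. - subst; unfold z, cst; lia. - contradiction.
    - destruct h as [n [H1 H2]]. destruct n. + unfold z, cst in H2; lia.
      + rewrite <- (H1 0%nat) by lia; unfold z, cst; lia. }
  assert (Hzz : graft z 1 z = z) by (unfold z; apply graft_cst).
  assert (Hlow : forall u, lex_lt u z -> lex_lt (graft z 1 u) z).
  { intros u Hu. rewrite <- Hzz at 2. apply graft_lt; auto. }
  exists f; split; [|split; [|split]].
  - intros u _. unfold f; destruct (excluded_middle_informative _) as [h|h].
    + unfold graft; simpl; unfold z, cst; lia.
    + auto.
  - intros y Hy. destruct (excluded_middle_informative (lex_lt y z)) as [h|h].
    + assert (ya : y 0%nat = a) by (pose proof (Hz _ h); lia).
      assert (Ag : agree z 1 y) by (intros i Hi; assert (i = 0%nat) by lia; subst; auto).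
      exists (shift 1 y); split; auto.
      assert (lex_lt (shift 1 y) z).
      { apply (proj1 (graft_lt z 1 _ _)). rewrite graft_shift by auto. rewrite Hzz; auto. }
      unfold f; destruct (excluded_middle_informative _); [|contradiction].
      apply graft_shift; auto.
    + exists y; split; auto. unfold f; destruct (excluded_middle_informative _); [contradiction|auto].
  - intros x y _ _. unfold f.
    destruct (excluded_middle_informative (lex_lt x z)) as [hx|hx];
    destruct (excluded_middle_informative (lex_lt y z)) as [hy|hy].
    + symmetry; apply graft_lt.
    + split; intros _.
      * apply (le_lt_trans _ _ _ (Hlow _ hx) hy).
      * apply (le_lt_trans _ _ _ hx hy).
    + split; intros H; exfalso.
      * apply (lt_asym _ _ H). apply (le_lt_trans _ _ _ hy hx).
      * apply (lt_asym _ _ H). apply (le_lt_trans _ _ _ (Hlow _ hy) hx).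
    + tauto.
  - intros x _; unfold f; destruct (excluded_middle_informative _).
    + apply te_graft.
    + apply te_refl.
Qed.

Definition neg (u : Zomega) : Zomega := fun n => - u n.

Lemma neg_neg u : neg (neg u) = u.
Proof. apply functional_extensionality; intros n; unfold neg; lia. Qed.

Lemma lt_neg x y : lex_lt (neg x) (neg y) <-> lex_lt y x.
Proof.
  unfold neg; split; intros [n [H1 H2]]; exists n; split; try lia;
    intros m Hm; specialize (H1 m Hm); lia.
Qed.

Lemma te_neg x y : te x y -> te (neg x) (neg y).
Proof. intros [m [n H]]; exists m, n; intros k; unfold neg; rewrite H; auto. Qed.

Lemma Tiso_neg A B : Tiso A B -> Tiso (fun u => A (neg u)) (fun u => B (neg u)).
Proof.
  intros [f [F1 [F2 [F3 F4]]]].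
  exists (fun u => neg (f (neg u))); split; [|split; [|split]].
  - intros x Hx; rewrite neg_neg; auto.
  - intros y Hy. destruct (F2 _ Hy) as [x [Hx e]]. exists (neg x); split.
    + rewrite neg_neg; auto.
    + rewrite neg_neg, e, neg_neg; auto.
  - intros x y Hx Hy. rewrite lt_neg, <- (lt_neg y x). apply F3; auto.
  - intros x Hx. rewrite <- (neg_neg x) at 1. apply te_neg; auto.
Qed.

Lemma gadget_down a : Tiso (fun _ => True) (fun u => u 0%nat <= a).
Proof.
  pose proof (Tiso_neg _ _ (gadget_up (- a))) as H.
  eapply Tiso_ext; [| |exact H]; intros u; unfold neg; simpl; split; intros; auto; lia.
Qed.

Definition CJ (J : Zomega -> Prop) d x := forall u, agree x d u -> J u.
Definition TT J d u := J u /\ ~ CJ J d u /\ CJ J (S d) u.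
Definition NE J d := exists u, TT J d u.
Definition FinalSeg (J : Zomega -> Prop) := forall x y, J x -> lex_lt x y -> J y.
Definition NoMin (J : Zomega -> Prop) := forall x, J x -> exists y, J y /\ lex_lt y x.

Lemma agree_le x d e u : (d <= e)%nat -> agree x e u -> agree x d u.
Proof. intros H1 H2 i Hi; apply H2; lia. Qed.
Lemma agree_sym x d u : agree x d u -> agree u d x.
Proof. intros H i Hi; symmetry; auto. Qed.
Lemma agree_trans x d u v : agree x d u -> agree u d v -> agree x d v.
Proof. intros H1 H2 i Hi; rewrite H2, H1; auto. Qed.
Lemma agree_refl x d : agree x d x.
Proof. intros i Hi; auto. Qed.

Lemma CJ_agree J d x y : agree x d y -> CJ J d x -> CJ J d y.
Proof. intros H1 H2 u Hu; apply H2; eapply agree_trans; eauto. Qed.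
Lemma CJ_mono J d e x : (d <= e)%nat -> CJ J d x -> CJ J e x.
Proof. intros H1 H2 u Hu; apply H2; eapply agree_le; eauto. Qed.
Lemma CJ_self J d x : CJ J d x -> J x.
Proof. intros H; apply H, agree_refl. Qed.

Lemma lt_agree x y w e : (forall n, (forall m, (m < n)%nat -> x m = y m) -> x n < y n -> (n < e)%nat) ->
  lex_lt x y -> agree y e w -> lex_lt x w.
Proof.
  intros Hb [n [H1 H2]] Hw. pose proof (Hb n H1 H2) as Hn.
  exists n; split.
  - intros m Hm; rewrite Hw by lia; auto.
  - rewrite Hw by lia; auto.
Qed.

Lemma CJ_exists J u : FinalSeg J -> NoMin J -> J u -> exists d, CJ J d u.
Proof.
  intros Hfin Hnm Hu. destruct (Hnm u Hu) as [v [Hv [n [H1 H2]]]].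
  exists (S n). intros w Hw. apply (Hfin v w Hv).
  exists n; split.
  - intros m Hm; rewrite Hw by lia; auto.
  - rewrite Hw by lia; auto.
Qed.

Lemma TT_cover J u : FinalSeg J -> NoMin J -> (exists w, ~ J w) -> J u -> exists d, TT J d u.
Proof.
  intros Hfin Hnm [w0 Hw0] Hu.
  destruct (ex_least _ (CJ_exists J u Hfin Hnm Hu)) as [d0 [Hd0 Hmin]].
  destruct d0 as [|d].
  - exfalso; apply Hw0, Hd0; intros i Hi; lia.
  - exists d; split; auto; split; auto.
Qed.

Lemma notCJ J d x : ~ CJ J d x -> exists w, agree x d w /\ ~ J w.
Proof.
  intros H. apply NNPP; intros H'; apply H; intros u Hu.
  apply NNPP; intros Hn; apply H'; eauto.
Qed.

Lemma TT_order J d e u v : FinalSeg J -> (d < e)%nat -> TT J d u -> TT J e v -> lex_lt v u.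
Proof.
  intros Hfin Hde [Ju [Hu1 Hu2]] [Jv [Hv1 Hv2]].
  assert (Hna : ~ agree u (S d) v).
  { intros Ha; apply Hv1. apply (CJ_mono J (S d)); [lia|]. eapply CJ_agree; eauto. }
  destruct (lt_total u v) as [eq|[h|h]]; auto.
  - subst; destruct Hna; apply agree_refl.
  - exfalso. destruct (notCJ _ _ _ Hv1) as [w [Hw Jw]]. apply Jw.
    apply (Hfin u w Ju). apply (lt_agree u v w e); auto.
    intros n H1 H2. destruct (Nat.lt_ge_cases n (S d)); [lia|].
    exfalso; apply Hna; intros i Hi; symmetry; apply H1; lia.
Qed.

Lemma TT_same J d u v : FinalSeg J -> TT J d u -> TT J d v -> agree u d v.
Proof.
  intros Hfin [Ju [Hu1 Hu2]] [Jv [Hv1 Hv2]].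
  destruct (lt_total u v) as [eq|[h|h]].
  - subst; apply agree_refl.
  - destruct (classic (agree u d v)) as [a|na]; auto. exfalso.
    destruct (notCJ _ _ _ Hv1) as [w [Hw Jw]]. apply Jw.
    apply (Hfin u w Ju). apply (lt_agree u v w d); auto.
    intros n H1 H2. destruct (Nat.lt_ge_cases n d); auto.
    exfalso; apply na; intros i Hi; symmetry; apply H1; lia.
  - destruct (classic (agree v d u)) as [a|na]; [apply agree_sym; auto|]. exfalso.
    destruct (notCJ _ _ _ Hu1) as [w [Hw Jw]]. apply Jw.
    apply (Hfin v w Jv). apply (lt_agree v u w d); auto.
    intros n H1 H2. destruct (Nat.lt_ge_cases n d); auto.
    exfalso; apply na; intros i Hi; symmetry; apply H1; lia.
Qed.

Lemma Z_least (K : Z -> Prop) a b : (forall j j', K j -> j <= j' -> K j') -> K a -> ~ K b ->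
  exists m, forall j, K j <-> m <= j.
Proof.
  intros Hup.
  assert (Hgen : forall n : nat, forall a, K a -> ~ K (a - Z.of_nat n) -> exists m, forall j, K j <-> m <= j).
  { induction n as [|n IH]; intros a' Ka Kb.
    - exfalso; apply Kb; replace (a' - Z.of_nat 0) with a' by lia; auto.
    - destruct (classic (K (a' - 1))) as [h|h].
      + apply (IH (a' - 1)); auto. replace (a' - 1 - Z.of_nat n) with (a' - Z.of_nat (S n)) by lia; auto.
      + exists a'; intros j; split; intros Hj.
        * destruct (Z.le_gt_cases a' j); auto. exfalso; apply h; apply (Hup j); auto; lia.
        * apply (Hup a'); auto. }
  intros Ka Kb. destruct (Z.le_gt_cases a b).
  - exfalso; apply Kb, (Hup a); auto.
  - apply (Hgen (Z.to_nat (a - b)) a); auto. replace (a - Z.of_nat (Z.to_nat (a - b))) with b by lia; auto.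
Qed.

Lemma TT_shape J d x : FinalSeg J -> TT J d x -> exists m, forall u, TT J d u <-> (agree x d u /\ m <= u d).
Proof.
  intros Hfin Hx.
  set (K := fun j => CJ J (S d) (graft x d (cst j))).
  assert (HK : forall u, agree x d u -> (CJ J (S d) u <-> K (u d))).
  { intros u Hu. assert (Ha : agree u (S d) (graft x d (cst (u d)))).
    { intros i Hi. unfold graft, cst. destruct (Nat.ltb_spec i d).
      - symmetry; auto.
      - f_equal; lia. }
    unfold K; split; intros H.
    - eapply CJ_agree; eauto.
    - eapply CJ_agree; [apply agree_sym; eauto|]; auto. }
  destruct Hx as [Jx [Hx1 Hx2]] eqn:EHx.
  assert (Hup : forall j j', K j -> j <= j' -> K j').
  { intros j j' Kj Hjj'. destruct (Z.eq_dec j j') as [e|ne]; [subst; auto|].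
    intros w Hw. apply (Hfin (graft x d (cst j)) w (CJ_self _ _ _ Kj)).
    exists d; split.
    - intros m Hm. rewrite Hw by lia. unfold graft. destruct (Nat.ltb_spec m d); auto; lia.
    - rewrite Hw by lia. unfold graft, cst. destruct (Nat.ltb_spec d d); lia. }
  assert (Ka : K (x d)) by (apply (HK x (agree_refl _ _)); auto).
  destruct (notCJ _ _ _ Hx1) as [w [Hw Jw]].
  assert (Kb : ~ K (w d)).
  { intros Kw. apply Jw. apply (CJ_self J (S d)). apply (HK w Hw); auto. }
  destruct (Z_least K _ _ Hup Ka Kb) as [m Hm].
  exists m; intros u; split.
  - intros Hu. assert (Ha : agree x d u) by (apply (TT_same J d x u Hfin); auto).
    split; auto. apply Hm, (HK u Ha), Hu.
  - intros [Ha Hmu]. assert (Ku : CJ J (S d) u) by (apply (HK u Ha), Hm; auto).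
    split; [apply (CJ_self _ _ _ Ku)|split; auto].
    intros Cu; apply Hx1. eapply CJ_agree; [apply agree_sym; eauto|]; auto.
Qed.

Lemma TT_iso J d x : FinalSeg J -> TT J d x -> Tiso (fun _ => True) (TT J d).
Proof.
  intros Hfin Hx. destruct (TT_shape J d x Hfin Hx) as [m Hm].
  eapply Tiso_trans; [apply (gadget_up m)|].
  eapply Tiso_ext; [| |apply (Tiso_graft x d (fun v => m <= v 0%nat))].
  - tauto.
  - intros u; rewrite Hm; unfold shift; rewrite Nat.add_0_r; tauto.
Qed.

Lemma NE_down J d : FinalSeg J -> NE J (S d) -> NE J d.
Proof.
  intros Hfin [u [Ju [Hu1 Hu2]]].
  set (v := graft u d (cst (u d + 1))).
  assert (Auv : agree u d v) by apply graft_agree.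
  assert (Cv : CJ J (S d) v).
  { intros w Hw. apply (Hfin u w Ju). exists d; split.
    - intros m Hm. rewrite Hw by lia. unfold v, graft. destruct (Nat.ltb_spec m d); auto; lia.
    - rewrite Hw by lia. unfold v, graft, cst. destruct (Nat.ltb_spec d d); lia. }
  exists v; split; [apply (CJ_self _ _ _ Cv)|split; auto].
  intros C. apply Hu1. apply (CJ_mono J d); [lia|]. eapply CJ_agree; [apply agree_sym; eauto|]; auto.
Qed.

Lemma NE_le J d e : FinalSeg J -> (d <= e)%nat -> NE J e -> NE J d.
Proof.
  intros Hfin H. induction H; auto. intros Hn; apply IHle, NE_down; auto.
Qed.

Lemma FS (J : Zomega -> Prop) :
  (exists u, J u) -> FinalSeg J -> NoMin J -> Tiso (fun _ => True) J.
Proof.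
  intros [u0 Ju0] Hfin Hnm.
  destruct (classic (exists w, ~ J w)) as [Hna|Hall].
  2:{ eapply Tiso_ext; [| |apply (Tiso_id (fun _ => True))]; [tauto|]. intros u; split; auto; intros _.
      apply NNPP; intros h; apply Hall; eauto. }
  assert (NE0 : NE J 0).
  { destruct (TT_cover J u0 Hfin Hnm Hna Ju0) as [d Hd]. apply (NE_le J 0 d); auto; [lia|]. exists u0; auto. }
  set (Sp := fun d (u : Zomega) => (NE J (S d) /\ u 0%nat = -1 - Z.of_nat d) \/
                         (~ NE J (S d) /\ NE J d /\ u 0%nat <= -1 - Z.of_nat d)).
  assert (HST : forall d, Tiso (Sp d) (TT J d)).
  { intros d. destruct (classic (NE J d)) as [[x Hx]|Hn].
    - apply (Tiso_trans _ (fun _ => True)); [|apply (TT_iso J d x); auto].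
      apply Tiso_sym.
      destruct (classic (NE J (S d))) as [h|h].
      + eapply Tiso_ext; [| |apply (Tiso_graft (cst (-1 - Z.of_nat d)) 1 (fun _ => True))]; [tauto|].
        intros u; unfold Sp; split.
        * intros [Ha _]; left; split; [exact h|]; rewrite (Ha 0%nat) by lia; reflexivity.
        * intros [[_ Hu]|[Hu _]]; [|contradiction]. split; auto.
          intros i Hi; assert (i = 0%nat) by lia; subst; auto.
      + eapply Tiso_ext; [| |apply (gadget_down (-1 - Z.of_nat d))]; [tauto|].
        intros u; unfold Sp; split.
        * intros H; right; split; auto; split; auto; exists x; auto.
        * intros [[h' _]|[_ [_ H]]]; [contradiction|auto].
    - exists (fun u => u); split; [|split; [|split]].
      + intros x [[h _]|[_ [h _]]]; [|contradiction]. exfalso; apply Hn, NE_down; auto.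
      + intros y Hy; exfalso; apply Hn; exists y; auto.
      + tauto.
      + intros; apply te_refl. }
  assert (Hglue := glue Sp (TT J)).
  eapply Tiso_trans; [apply (gadget_down (-1))|].
  eapply Tiso_ext; [| |apply Hglue; auto].
  - intros u; split; [intros [d [[_ h]|[_ [_ h]]]]; lia|intros H].
    set (e := Z.to_nat (- u 0%nat - 1)).
    assert (He : u 0%nat = -1 - Z.of_nat e) by (unfold e; lia).
    destruct (classic (NE J (S e))) as [h|h].
    + exists e; left; auto.
    + destruct (ex_least (fun D => ~ NE J (S D)) (ex_intro _ e h)) as [D [HD Hmin]].
      assert (DE : (D <= e)%nat).
      { destruct (Nat.le_gt_cases D e); auto. exfalso; apply (Hmin e); auto. }
      exists D; right; split; auto; split; [|lia].
      destruct D as [|D']; auto. apply NNPP; apply Hmin; lia.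
  - intros u; split; [intros [d [Hd _]]; auto|intros Hu].
    apply (TT_cover J u Hfin Hnm Hna Hu).
  - intros d e x y Hde Hx Hy. apply lt_head.
    assert (NEe : NE J e) by (destruct Hy as [[h _]|[_ [h _]]]; [apply NE_down|]; auto).
    assert (NEd : NE J (S d)) by (apply (NE_le J _ e); auto).
    destruct Hx as [[_ hx]|[h _]]; [|contradiction].
    destruct Hy as [[_ hy]|[_ [_ hy]]]; lia.
  - intros d e x y Hde Hx Hy. apply (TT_order J d e); auto.
Qed.

Lemma IS (K : Zomega -> Prop) :
  (exists u, K u) -> (forall x y, K y -> lex_lt x y -> K x) ->
  (forall x, K x -> exists y, K y /\ lex_lt x y) -> Tiso (fun _ => True) K.
Proof.
  intros [k Hk] Hini Hnm.
  assert (H : Tiso (fun _ => True) (fun u => K (neg u))).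
  { apply FS.
    - exists (neg k); cbv beta; rewrite neg_neg; auto.
    - intros x y Hx Hl. apply (Hini _ (neg x) Hx). apply lt_neg; auto.
    - intros x Hx. destruct (Hnm _ Hx) as [y [Hy Hl]]. exists (neg y); split.
      + cbv beta; rewrite neg_neg; auto.
      + apply (proj1 (lt_neg _ _)). rewrite neg_neg; auto. }
  apply Tiso_neg in H. eapply Tiso_ext; [| |exact H]; [tauto|].
  intros u; cbv beta; rewrite neg_neg; tauto.
Qed.

Lemma Tiso_restrict f A B C : Tw f A B -> (forall y, C y -> B y) ->
  Tiso (fun x => A x /\ C (f x)) C.
Proof.
  intros [F1 [F2 [F3 F4]]] HCB. exists f; split; [|split; [|split]].
  - intros x [_ h]; auto.
  - intros y Hy. destruct (F2 y (HCB y Hy)) as [x [Hx e]]. exists x; subst; auto.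
  - intros x y [hx _] [hy _]; auto.
  - intros x [hx _]; auto.
Qed.

Lemma Sub_final U K : Tiso (fun _ => True) U -> (forall y, K y -> U y) ->
  (forall x y, K x -> U y -> lex_lt x y -> K y) -> (exists u, K u) ->
  (forall x, K x -> exists y, K y /\ lex_lt y x) -> Tiso (fun _ => True) K.
Proof.
  intros [f Hf] HKU Hfin [k Hk] Hnm.
  pose proof Hf as [F1 [F2 [F3 F4]]].
  eapply Tiso_trans; [|apply (Tiso_restrict f _ _ K Hf HKU)].
  eapply Tiso_ext; [| |apply (FS (fun x => K (f x)))]; [tauto|tauto| | |].
  - destruct (F2 k (HKU k Hk)) as [x [_ e]]; exists x; subst; auto.
  - intros x y Hx Hl. apply (Hfin (f x)); auto. apply (proj1 (F3 x y I I)); auto.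
  - intros x Hx. destruct (Hnm _ Hx) as [k' [Hk' Hl]].
    destruct (F2 k' (HKU _ Hk')) as [y [_ e]]; subst. exists y; split; auto.
    apply (proj2 (F3 y x I I)); auto.
Qed.

Lemma Sub_init U K : Tiso (fun _ => True) U -> (forall y, K y -> U y) ->
  (forall x y, K y -> U x -> lex_lt x y -> K x) -> (exists u, K u) ->
  (forall x, K x -> exists y, K y /\ lex_lt x y) -> Tiso (fun _ => True) K.
Proof.
  intros [f Hf] HKU Hini [k Hk] Hnm.
  pose proof Hf as [F1 [F2 [F3 F4]]].
  eapply Tiso_trans; [|apply (Tiso_restrict f _ _ K Hf HKU)].
  eapply Tiso_ext; [| |apply (IS (fun x => K (f x)))]; [tauto|tauto| | |].
  - destruct (F2 k (HKU k Hk)) as [x [_ e]]; exists x; subst; auto.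
  - intros x y Hy Hl. apply (Hini (f x) (f y)); auto. apply (proj1 (F3 x y I I)); auto.
  - intros x Hx. destruct (Hnm _ Hx) as [k' [Hk' Hl]].
    destruct (F2 k' (HKU _ Hk')) as [y [_ e]]; subst. exists y; split; auto.
    apply (proj2 (F3 x y I I)); auto.
Qed.

Lemma dense a b : lex_lt a b -> exists c, lex_lt a c /\ lex_lt c b.
Proof.
  intros [n [H1 H2]].
  exists (graft a (S n) (cst (a (S n) + 1))). split.
  - exists (S n); split.
    + intros m Hm; unfold graft; destruct (Nat.ltb_spec m (S n)); auto; lia.
    + unfold graft, cst; destruct (Nat.ltb_spec (S n) (S n)); lia.
  - exists n; split.
    + intros m Hm; unfold graft; destruct (Nat.ltb_spec m (S n)); [auto|lia].
    + unfold graft; destruct (Nat.ltb_spec n (S n)); [auto|lia].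
Qed.

Lemma to_order_iso X B : tail_closed X -> Tiso (fun _ => True) B -> order_iso X (fun u => X u /\ B u).
Proof.
  intros HX [f [F1 [F2 [F3 F4]]]]. exists f; split; [|split].
  - intros x Hx; split; auto. apply (HX x); auto. apply te_tail; auto.
  - intros y [Xy By]. destruct (F2 y By) as [x [_ e]]; exists x; split; auto.
    apply (HX y); auto. apply te_tail. subst; apply te_sym; auto.
  - intros x y _ _; auto.
Qed.

Lemma interval_iso I : open_interval I -> Tiso (fun _ => True) I.
Proof.
  intros [[z Hz] [Hconv [Hmax Hmin]]].
  assert (Hup : Tiso (fun _ => True) (fun u => I u /\ lex_lt z u)).
  { apply (Sub_init (fun u => lex_lt z u)).
    - apply FS.
      + destruct (Hmax z Hz) as [b [_ h]]; eauto.
      + intros x y Hx Hl; eapply lt_trans; eauto.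
      + intros x Hx. destruct (dense _ _ Hx) as [c [h1 h2]]; eauto.
    - intros y [_ h]; auto.
    - intros x y [Iy hy] Hx Hl; split; auto. apply (Hconv z x y); auto.
    - destruct (Hmax z Hz) as [b [Ib h]]; eauto.
    - intros x [Ix hx]. destruct (Hmax x Ix) as [y [Iy h]]. exists y; split; auto.
      split; auto; eapply lt_trans; eauto. }
  assert (Hlo : Tiso (fun _ => True) (fun u => I u /\ lex_lt u z)).
  { apply (Sub_final (fun u => lex_lt u z)).
    - apply IS.
      + destruct (Hmin z Hz) as [b [_ h]]; eauto.
      + intros x y Hy Hl; eapply lt_trans; eauto.
      + intros x Hx. destruct (dense _ _ Hx) as [c [h1 h2]]; eauto.
    - intros y [_ h]; auto.
    - intros x y [Ix hx] Hy Hl; split; auto. apply (Hconv x y z); auto.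
    - destruct (Hmin z Hz) as [b [Ib h]]; eauto.
    - intros x [Ix hx]. destruct (Hmin x Ix) as [y [Iy h]]. exists y; split; auto.
      split; auto; eapply lt_trans; eauto. }
  assert (Hupa : Tiso (fun _ => True) (fun u => lex_lt z u)).
  { apply FS.
    + destruct (Hmax z Hz) as [b [_ h]]; eauto.
    + intros x y Hx Hl; eapply lt_trans; eauto.
    + intros x Hx. destruct (dense _ _ Hx) as [c [h1 h2]]; eauto. }
  assert (Hloa : Tiso (fun _ => True) (fun u => lex_lt u z)).
  { apply IS.
    + destruct (Hmin z Hz) as [b [_ h]]; eauto.
    + intros x y Hy Hl; eapply lt_trans; eauto.
    + intros x Hx. destruct (dense _ _ Hx) as [c [h1 h2]]; eauto. }
  set (A := fun d (u : Zomega) => match d with 0%nat => lex_lt z u | 1%nat => u = z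
                                  | 2%nat => lex_lt u z | _ => False end).
  set (B := fun d (u : Zomega) => match d with 0%nat => I u /\ lex_lt z u | 1%nat => u = z
                                  | 2%nat => I u /\ lex_lt u z | _ => False end).
  assert (H := glue A B).
  eapply Tiso_ext; [| |apply H].
  - intros u; split; [tauto|intros _].
    destruct (lt_total u z) as [e|[h|h]]; [exists 1%nat|exists 2%nat|exists 0%nat]; simpl; auto.
  - intros u; split.
    + intros [d Hd]; destruct d as [|[|[|d]]]; simpl in Hd; try tauto. subst; auto.
    + intros Iu. destruct (lt_total u z) as [e|[h|h]]; [exists 1%nat|exists 2%nat|exists 0%nat]; simpl; auto.
  - intros d e x y Hde Hx Hy.
    destruct d as [|[|[|d]]]; destruct e as [|[|[|e]]]; simpl in Hx, Hy; try lia; try tauto;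
      subst; auto; eapply lt_trans; eauto.
  - intros d e x y Hde Hx Hy.
    destruct d as [|[|[|d]]]; destruct e as [|[|[|e]]]; simpl in Hx, Hy; try lia; try tauto;
      subst; try tauto; eapply lt_trans; [apply Hy|apply Hx].
  - intros d. destruct d as [|[|[|d]]]; simpl.
    + eapply Tiso_trans; [apply Tiso_sym, Hupa|exact Hup].
    + apply Tiso_id.
    + eapply Tiso_trans; [apply Tiso_sym, Hloa|exact Hlo].
    + apply Tiso_id.
Qed.

Lemma cone_iso r : Tiso (fun _ => True) (cone r).
Proof.
  eapply Tiso_ext; [| |apply (Tiso_graft (prepend r (cst 0)) (length r) (fun _ => True))]; [tauto|].
  intros u; split.
  - intros [Ha _]. exists (shift (length r) u). apply functional_extensionality; intros i.
    unfold prepend, shift. destruct (Nat.ltb_spec i (length r)).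
    + rewrite Ha by auto. unfold prepend. destruct (Nat.ltb_spec i (length r)); [auto|lia].
    + f_equal; lia.
  - intros [u' e]; subst; split; auto. intros i Hi. unfold prepend.
    destruct (Nat.ltb_spec i (length r)); [auto|lia].
Qed.

Theorem mainTheorem8 (X : Zomega -> Prop) :
  tail_closed X ->
  (forall I : Zomega -> Prop, open_interval I ->
     order_iso X (fun u => X u /\ I u)) /\
  (forall r : list Z, r <> nil ->
     order_iso X (fun u => X u /\ cone r u)).
Proof.
  intros HX; split.
  - intros I HI; apply to_order_iso; auto; apply interval_iso; auto.
  - intros r _; apply to_order_iso; auto; apply cone_iso.
Qed.
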